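(* Let $R\subseteq S$ be as in the context, let $n=n_1+\cdots+n_\ell$ with $n_i$ positive integers, and let $\mathcal{C}\subseteq S^n$ be any code (linear or not) with at least two elements. Setting $k=\log_{|S|}|\mathcal{C}|$, we have ${\rm d}_{SR}(\mathcal{C})\le n-k+1$, where ${\rm d}_{SR}$ is the sum-rank distance over $R$ for the length partition $n=n_1+\cdots+n_\ell$.
   Context: $R$ is a finite commutative chain ring with maximal ideal $\mathfrak{m}$; $S=R[x]/(h)$ with $h\in R[x]$ monic of degree $m$ irreducible modulo $\mathfrak{m}$, a free $R$-module of rank $m$. Rank: for $\mathbf{u}\in S^s$, fix an $R$-basis $\alpha_1,\ldots,\alpha_m$ of $S$ and write $\mathbf{u}=\sum_{i=1}^m\alpha_i(c_{i,1},\ldots,c_{i,s})$ with $c_{i,j}\in R$; ${\rm rk}(\mathbf{u})$ is the number of nonzero diagonal entries in the Smith normal form of $(c_{i,j})\in R^{m\times s}$ (independent of the basis). For $\mathbf{c}=(\mathbf{c}^{(1)},\ldots,\mathbf{c}^{(\ell)})\in S^n$ with $\mathbf{c}^{(i)}\in S^{n_i}$, ${\rm wt}_{SR}(\mathbf{c})=\sum_i{\rm rk}(\mathbf{c}^{(i)})$; ${\rm d}_{SR}(\mathbf{c},\mathbf{d})={\rm wt}_{SR}(\mathbf{c}-\mathbf{d})$; ${\rm d}_{SR}(\mathcal{C})$ is the minimum of ${\rm d}_{SR}(\mathbf{c},\mathbf{d})$ over distinct $\mathbf{c},\mathbf{d}\in\mathcal{C}$. *)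

(* Defs.v *)
From Stdlib Require Import Reals.
From HB Require Import structures.
From mathcomp Require Import all_boot all_order all_algebra.
Set Implicit Arguments. Unset Strict Implicit. Unset Printing Implicit Defensive.
Import GRing.Theory.
Local Open Scope ring_scope.

Section Defs.
Variable R : finComUnitRingType.

Definition is_ideal (I : {set R}) : bool :=
  [&& (0 : R) \in I,
      [forall a in I, forall b in I, a - b \in I] &
      [forall a in I, forall r : R, r * a \in I]].

Definition chain_ring : Prop :=
  forall I J : {set R}, is_ideal I -> is_ideal J -> I \subset J \/ J \subset I.

Definition is_maximal_ideal (M : {set R}) : Prop :=
  [/\ is_ideal M, M != [set: R] &
      forall J : {set R}, is_ideal J -> M \subset J -> J = M \/ J = [set: R]].

(* h is irreducible modulo the ideal M: its image hbar in (R/M)[x] is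
   non-constant and any factorisation hbar = fbar * gbar has fbar or gbar constant.
   Written on representatives: "fbar constant" <-> all coefficients of index >= 1 lie in M,
   and "hbar = fbar gbar" <-> all coefficients of h - f g lie in M. *)
Definition red_const (M : {set R}) (f : {poly R}) : Prop :=
  forall i : nat, (0 < i)%N -> f`_i \in M.

Definition irreducible_mod (M : {set R}) (h : {poly R}) : Prop :=
  ~ red_const M h /\
  forall f g : {poly R}, (forall i : nat, (h - f * g)`_i \in M) ->
     red_const M f \/ red_const M g.

Definition dvdR (a b : R) : bool := [exists c : R, b == a * c].

Definition diag_rect (a b : nat) (d : {ffun 'I_(minn a b) -> R}) : 'M[R]_(a, b) :=
  \matrix_(i < a, j < b) \sum_(k < minn a b | (i == k :> nat) && (j == k :> nat)) d k.

Definition snf_rankb (a b : nat) (M : 'M[R]_(a, b)) (r : nat) : bool :=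
  [exists P : 'M[R]_a, exists Q : 'M[R]_b, exists d : {ffun 'I_(minn a b) -> R},
    [&& P \in unitmx, Q \in unitmx, M == P *m diag_rect d *m Q,
        [forall k : 'I_(minn a b), forall k' : 'I_(minn a b),
            ((k <= k')%N ==> dvdR (d k) (d k'))] &
        r == #|[set k | d k != 0]| ]].

Definition rk_mx (a b : nat) (M : 'M[R]_(a, b)) : nat :=
  if [pick r : 'I_(minn a b).+1 | snf_rankb M r] is Some r then val r else 0%N.

Variable h : {poly R}.
(* S = R[x]/(h); for h monic of degree m >= 1, elements of {poly %/ h} are the
   polynomials of size <= m, i.e. coordinates w.r.t. the R-basis 1, x, ..., x^(m-1) *)
Notation S := {poly %/ h}.
Notation m := (size (mk_monic h)).-1.

Definition coord_mx (s : nat) (u : 'rV[S]_s) : 'M[R]_(m, s) :=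
  \matrix_(i < m, j < s) ((u 0 j : {poly R})`_i).

Definition rkS (s : nat) (u : 'rV[S]_s) : nat := rk_mx (coord_mx u).

Variables (l : nat) (ns : 'I_l -> nat).
Notation n := (\sum_(i < l) ns i)%N.

(* sum-rank weight for the partition n = n_1 + ... + n_l (blocks = consecutive coordinates) *)
Definition wtSR (c : 'rV[S]_n) : nat := (\sum_(i < l) rkS (submxrow c i))%N.

Definition dSR (c d : 'rV[S]_n) : nat := wtSR (c - d).

(* minimum sum-rank distance of a code (every weight is <= n, so the default n
   of the iterated minimum is harmless when C has two distinct elements) *)
Definition dSR_code (C : {set 'rV[S]_n}) : nat :=
  (\big[minn/n]_(c in C) \big[minn/n]_(d in C | d != c) dSR c d)%N.

End Defs.

(* Main.v *)
Require Import Defs.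
From Stdlib Require Import Reals Lra Lia.
From HB Require Import structures.
From mathcomp Require Import all_boot all_order all_algebra.
Set Implicit Arguments. Unset Strict Implicit. Unset Printing Implicit Defensive.

Section Key.
Import GRing.Theory.
Local Open Scope ring_scope.
Variable R : finComUnitRingType.
Hypothesis chR : chain_ring R.

Lemma dvdR_trans (a b c : R) : dvdR a b -> dvdR b c -> dvdR a c.
Proof.
case/existsP=> x /eqP ->; case/existsP=> y /eqP ->.
by apply/existsP; exists (x * y); rewrite mulrA.
Qed.

Lemma dvdR_refl (a : R) : dvdR a a.
Proof. by apply/existsP; exists 1; rewrite mulr1. Qed.

Lemma dvdR_tot (a b : R) : dvdR a b || dvdR b a.
Proof.
pose Id (x : R) := [set y | dvdR x y].
have idl x : is_ideal (Id x).
  apply/and3P; split.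
  - by rewrite inE; apply/existsP; exists 0; rewrite mulr0.
  - apply/forall_inP=> u; rewrite inE => /existsP [cu /eqP ->].
    apply/forall_inP=> v; rewrite inE => /existsP [cv /eqP ->].
    by rewrite inE; apply/existsP; exists (cu - cv); rewrite mulrBr.
  - apply/forall_inP=> u; rewrite inE => /existsP [cu /eqP ->].
    apply/forallP=> z; rewrite inE; apply/existsP; exists (z * cu).
    by rewrite mulrCA.
case: (chR (idl a) (idl b)) => /subsetP H.
- by move: (H a); rewrite !inE dvdR_refl => /(_ isT) ->; rewrite orbT.
- by move: (H b); rewrite !inE dvdR_refl => /(_ isT) ->.
Qed.

Lemma key (I T : finType) (d : R) : forall nT (TT : {set T}) (II : {set I})
  (A : I -> T -> R) (B : T -> I -> R),
  #|TT| = nT -> (#|TT| < #|II|)%N ->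
  (forall i k, i \in II -> k \in II ->
     \sum_(t in TT) A i t * B t k = d * (i == k)%:R) -> d = 0.
Proof.
elim=> [|nT IH] TT II A B cT lt E.
  have: (0 < #|II|)%N by apply: leq_ltn_trans lt.
  rewrite card_gt0 => /set0Pn [i Hi].
  move: (E i i Hi Hi); move/eqP: cT; rewrite cards_eq0 => /eqP ->.
  by rewrite big_set0 eqxx mulr1.
have: (0 < #|TT|)%N by rewrite cT.
rewrite card_gt0 => /set0Pn [t1 Ht1].
have: (0 < #|II|)%N by apply: leq_ltn_trans lt.
rewrite card_gt0 => /set0Pn [k1 Hk1].
have x1X : (t1, k1) \in setX TT II by rewrite in_setX Ht1 Hk1.
pose f (x : T * I) := #|[set y | dvdR (B x.1 x.2) y]|.
case: (@arg_maxnP _ (t1, k1) (mem (setX TT II)) f x1X) => [[t0 k0]].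
move=> /setXP [Ht0 Hk0] Hmax.
set p := B t0 k0.
have piv t k : t \in TT -> k \in II -> dvdR p (B t k).
  move=> Ht Hk; case/orP: (dvdR_tot p (B t k)) => // H.
  have Hs : [set y | dvdR p y] \subset [set y | dvdR (B t k) y].
    by apply/subsetP=> y; rewrite !inE; apply: dvdR_trans.
  have tkX : (t, k) \in setX TT II by apply/setXP.
  have Hc := Hmax (t, k); rewrite /= in Hc.
  have /eqP Heq : [set y | dvdR p y] == [set y | dvdR (B t k) y].
    by rewrite eqEcard Hs /= (Hc tkX).
  have : B t k \in [set y | dvdR (B t k) y] by rewrite inE dvdR_refl.
  by rewrite -Heq inE.
pose Bt t k := if (t == t0) && (k == k0) then 1
               else odflt 0 [pick c | B t k == p * c].
have HB t k : t \in TT -> k \in II -> B t k = p * Bt t k.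
  move=> Ht Hk; rewrite /Bt; case: ifP => [/andP [/eqP -> /eqP ->]|_].
    by rewrite mulr1.
  case: pickP => [c /eqP //|].
  by case/existsP: (piv t k Ht Hk) => c Hc /(_ c); rewrite Hc.
have Bt00 : Bt t0 k0 = 1 by rewrite /Bt !eqxx.
pose A1 i t := A i t * p.
have E1 i k : i \in II -> k \in II ->
    \sum_(t in TT) A1 i t * Bt t k = d * (i == k)%:R.
  move=> Hi Hk; rewrite -(E i k Hi Hk); apply: eq_bigr => t Ht.
  by rewrite HB // /A1 mulrA.
pose B' t k := Bt t k - Bt t k0 * Bt t0 k.
apply: (IH (TT :\ t0) (II :\ k0) A1 B').
- by move: cT; rewrite (cardsD1 t0) Ht0 add1n => -[].
- by move: lt; rewrite (cardsD1 t0 TT) (cardsD1 k0 II) Ht0 Hk0 !add1n ltnS.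
move=> i k; rewrite !in_setD1 => /andP [ik0 Hi] /andP [kk0 Hk].
have S1 := E1 i k Hi Hk; have S2 := E1 i k0 Hi Hk0.
rewrite (big_setD1 t0 Ht0) /= in S1; rewrite (big_setD1 t0 Ht0) /= Bt00 in S2.
rewrite (negbTE ik0) mulr0 in S2.
have -> : \sum_(t in TT :\ t0) A1 i t * B' t k =
   \sum_(t in TT :\ t0) A1 i t * Bt t k -
   (\sum_(t in TT :\ t0) A1 i t * Bt t k0) * Bt t0 k.
  rewrite big_distrl /= -sumrB; apply: eq_bigr => t _.
  by rewrite /B' mulrBr mulrA.
have -> : \sum_(t in TT :\ t0) A1 i t * Bt t k0 = - (A1 i t0 * 1).
  by apply/eqP; rewrite -addr_eq0 addrC S2.
rewrite mulr1 mulNr opprK.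
by rewrite -S1 addrC.
Qed.
End Key.


Section Snf.
Import GRing.Theory.
Local Open Scope ring_scope.
Variable R : finComUnitRingType.
Hypothesis chR : chain_ring R.

Lemma snf_le (a b : nat) (Mx : 'M[R]_(a,b)) r (J : {set 'I_b}) :
  (forall i j, j \notin J -> Mx i j = 0) -> snf_rankb Mx r -> (r <= #|J|)%N.
Proof.
move=> HJ.
case/existsP => P /existsP [Q /existsP [d /and5P [PU QU /eqP EM /forallP Hdv /eqP Er]]].
rewrite Er leqNgt; apply/negP => Hlt.
set KK := [set k | d k != 0].
have: (0 < #|KK|)%N by apply: leq_ltn_trans Hlt.
rewrite card_gt0 => /set0Pn [k1 Hk1].
case: (@arg_maxnP _ k1 (mem KK) (fun k => val k) Hk1) => kmax Hkmax Hmax.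
have Hc k : k \in KK -> dvdR (d k) (d kmax).
  by move=> Hk; move/forallP: (Hdv k) => /(_ kmax) /implyP; apply; apply: Hmax.
pose c k := odflt 0 [pick c | d kmax == d k * c].
have Hck k : k \in KK -> d kmax = d k * c k.
  move=> Hk; rewrite /c; case: pickP => [x /eqP //|].
  by case/existsP: (Hc k Hk) => x Hx /(_ x); rewrite Hx.
pose wa : 'I_(minn a b) -> 'I_a := widen_ord (geq_minl a b).
pose wb : 'I_(minn a b) -> 'I_b := widen_ord (geq_minr a b).
pose N := invmx P *m Mx.
pose Qi := invmx Q.
have ED : invmx P *m Mx *m Qi = diag_rect d.
  by rewrite EM /Qi mulmxA mulKmx // mulmxK.
have HN i t : t \notin J -> N i t = 0.
  move=> Ht; rewrite /N mxE; apply: big1 => l _; by rewrite HJ // mulr0.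
suff H0 : d kmax = 0 by move: Hkmax; rewrite !inE H0 eqxx.
apply: (@key R chR _ _ (d kmax) #|J| J KK (fun i t => N (wa i) t)
          (fun t k => Qi t (wb k) * c k) erefl Hlt).
move=> i k Hi Hk.
transitivity ((N *m Qi) (wa i) (wb k) * c k).
  rewrite mxE big_distrl /= [RHS](bigID (mem J)) /= [X in _ = _ + X]big1 ?addr0.
    by apply: eq_bigr => t _; rewrite mulrA.
  by move=> t Ht; rewrite HN // !mul0r.
rewrite /N ED /diag_rect mxE.
case: (eqVneq i k) => [<-|ik].
  rewrite (big_pred1 i) ?mulr1 -?Hck //.
  by move=> x /=; rewrite /= andbb eq_sym.
rewrite big_pred0 ?mul0r ?mulr0 //.
move=> x /=; apply/negP => /andP [/eqP H1 /eqP H2].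
by move/eqP: ik; apply; apply: val_inj; rewrite /= H1 H2.
Qed.

Lemma rk_le a b (Mx : 'M[R]_(a,b)) (J : {set 'I_b}) :
  (forall i j, j \notin J -> Mx i j = 0) -> (rk_mx Mx <= #|J|)%N.
Proof.
move=> HJ; rewrite /rk_mx; case: pickP => // r Hr.
exact: snf_le HJ Hr.
Qed.

End Snf.


Section Wt.
Import GRing.Theory.
Local Open Scope ring_scope.
Variable R : finComUnitRingType.
Hypothesis chR : chain_ring R.

Lemma rkS_le (h : {poly R}) s (u : 'rV[{poly %/ h}]_s) :
  (rkS u <= #|[set j : 'I_s | u 0%R j != 0%R]|)%N.
Proof.
apply: rk_le => // i j; rewrite inE negbK => /eqP Hu; rewrite mxE Hu.
by rewrite coef0.
Qed.

Lemma wt_le (h : {poly R}) l (ns : 'I_l -> nat)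
   (c : 'rV[{poly %/ h}]_(\sum_(i < l) ns i)) :
  (wtSR c <= #|[set z : 'I_(\sum_(i < l) ns i) | c 0%R z != 0%R]|)%N.
Proof.
rewrite /wtSR; apply: leq_trans.
  apply: leq_sum => i _; exact: rkS_le.
apply: eq_leq.
under eq_bigr do rewrite -sum1_card.
rewrite -sum1_card.
rewrite (reindex _ (onW_bij _ (@tagnat.rank_bij l ns))) /=.
rewrite sig_big_dep /=.
apply: eq_bigl => x; rewrite !inE mxE tagnat.rankE.
by [].
Qed.
End Wt.


Lemma INR_expn (a k : nat) : INR (expn a k) = pow (INR a) k.
Proof.
elim: k => [|k IH]; first by rewrite expn0.
by rewrite expnS -multE mult_INR IH.
Qed.

Lemma real_part (N Sc n dl K : nat) : (0 < N)%N -> (2 <= Sc)%N ->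
  (N <= Sc ^ K)%N -> (K + dl <= n + 1)%N ->
  Rle (INR dl) (Rplus (Rminus (INR n) (Rdiv (ln (INR N)) (ln (INR Sc)))) (INR 1)).
Proof.
move=> /leP HN /leP HS /leP HNK /leP Hsum.
have HN' : Rlt 0 (INR N) by apply: lt_0_INR.
have HS1 : Rlt 1 (INR Sc) by apply: (lt_INR 1); lia.
have HL : Rlt 0 (ln (INR Sc)) by rewrite -ln_1; apply: ln_increasing; lra.
have H1 : Rle (ln (INR N)) (Rmult (INR K) (ln (INR Sc))).
  rewrite -ln_pow; last lra.
  rewrite -INR_expn.
  have H := le_INR _ _ HNK.
  case: (Rle_lt_or_eq_dec _ _ H) => H'.
    by apply: Rlt_le; apply: ln_increasing.
  by rewrite H'; apply: Rle_refl.
have H2 : Rle (Rdiv (ln (INR N)) (ln (INR Sc))) (INR K).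
  unfold Rdiv.
  apply: (Rmult_le_reg_r (ln (INR Sc))) => //.
  rewrite Rmult_assoc Rinv_l; last lra.
  by rewrite Rmult_1_r.
have H3 := le_INR _ _ Hsum.
rewrite !plus_INR in H3.
lra.
Qed.

Lemma bigmin_leq (I : finType) (P : pred I) (F : I -> nat) x j :
  P j -> (\big[minn/x]_(i | P i) F i <= F j)%N.
Proof.
move=> Pj; rewrite -big_filter.
have : j \in [seq i <- index_enum I | P i] by rewrite mem_filter Pj mem_index_enum.
elim: [seq i <- index_enum I | P i] => [//|a s IH].
rewrite inE big_cons => /orP [/eqP -> | /IH H]; first exact: geq_minl.
exact: leq_trans (geq_minr _ _) H.
Qed.

Section Comb.
Import GRing.Theory.
Local Open Scope ring_scope.
Variable R : finComUnitRingType.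
Hypothesis chR : chain_ring R.

Lemma card_bound (h : {poly R}) l (ns : 'I_l -> nat)
  (C : {set 'rV[{poly %/ h}]_(\sum_(i < l) ns i)}) :
  exists K, (#|C| <= #|{poly %/ h}| ^ K)%N /\
            (K + dSR_code C <= (\sum_(i < l) ns i) + 1)%N.
Proof.
set n := (\sum_(i < l) ns i)%N.
set dl := dSR_code C.
have dln : (dl <= n)%N.
  rewrite /dl /dSR_code; elim/big_ind: _ => //.
    by move=> x y hx hy; rewrite geq_min hx.
  move=> c _; elim/big_ind: _ => //.
  by move=> x y hx hy; rewrite geq_min hx.
  move=> x _; apply: leq_trans (wt_le chR _) _.
  by apply: leq_trans (max_card _) _; rewrite card_ord.
have dle c d : c \in C -> d \in C -> d != c -> (dl <= dSR c d)%N.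
  move=> Hc Hd Hdc; rewrite /dl /dSR_code.
  apply: leq_trans; first by apply: bigmin_leq; exact: Hc.
  by apply: bigmin_leq; rewrite Hd Hdc.
case Edl: dl => [|dl'].
  exists n; split; last by rewrite addn0 addn1.
  apply: leq_trans (max_card _) _.
  by rewrite card_mx mul1n.
have Hdl' : (dl' <= n)%N by rewrite -ltnS -Edl; apply: leq_trans dln _.
have HK : (n - dl' <= n)%N by apply: leq_subr.
exists (n - dl')%N; split; last by rewrite addnS -addn1 subnK.
pose pi (c : 'rV[{poly %/ h}]_n) : 'rV[{poly %/ h}]_(n - dl') :=
  \row_(j < n - dl') c 0 (widen_ord HK j).
have inj : {in C &, injective pi}.
  move=> c d Hc Hd Hpi; apply/eqP; apply/negPn/negP => cd.
  have := dle c d Hc Hd; rewrite eq_sym cd => /(_ isT).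
  rewrite Edl /dSR => H.
  have := leq_trans H (wt_le chR (c - d)).
  set X := widen_ord HK @: [set: 'I_(n - dl')].
  have Hsub : [set z : 'I_n | (c - d) 0%R z != 0%R] \subset ~: X.
    apply/subsetP => z; rewrite !inE; apply: contra => /imsetP [j _ ->].
    have := congr1 (fun M : 'rV_(n - dl') => M 0%R j) Hpi.
    by rewrite /pi /= !mxE => ->; rewrite subrr.
  move=> H2; have := leq_trans H2 (subset_leq_card Hsub).
  have cX : #|X| = (n - dl')%N.
    by rewrite card_imset ?cardsT ?card_ord //; by move=> a b /(congr1 val) /= /val_inj.
  have := cardsC X; rewrite card_ord cX => E.
  have -> : #|~: X| = dl'.
    by apply/eqP; rewrite -(eqn_add2l (n - dl')) E subnK.
  by rewrite ltnn.
rewrite -(card_in_imset inj).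
apply: leq_trans (max_card _) _.
by rewrite card_mx mul1n.
Qed.
End Comb.

Lemma card_S_ge2 (R : finComUnitRingType) (h : {poly R}) : (2 <= #|{poly %/ h}|)%N.
Proof.
rewrite card_qpoly.
have Hm : (2 <= size (mk_monic h))%N.
  rewrite /mk_monic; case: ifP => [/andP [H _] //|_].
  by rewrite size_polyX.
have HR : (2 <= #|R|)%N.
  have : #|[set (0 : R)%R; 1%R]| = 2%N by rewrite cards2 eq_sym GRing.oner_neq0.
  by move=> <-; apply: max_card.
have HR1 := HR.
case: (size (mk_monic h)) Hm => [|[|m]] // _.
rewrite /= expnS; apply: leq_trans HR _; apply: leq_pmulr.
by rewrite expn_gt0 (leq_trans _ HR1).
Qed.

Theorem proposition1 (R : finComUnitRingType) (M : {set R}) (h : {poly R})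
    (l : nat) (ns : 'I_l -> nat) (C : {set 'rV[{poly %/ h}]_(\sum_(i < l) ns i)}) :
  chain_ring R ->
  is_maximal_ideal M ->
  h \is monic ->
  irreducible_mod M h ->
  (forall i : 'I_l, 0 < ns i) ->
  1 < #|C| ->
  Rle (INR (dSR_code C))
      (Rplus (Rminus (INR (\sum_(i < l) ns i))
                     (Rdiv (ln (INR #|C|)) (ln (INR #|{poly %/ h}|))))
             (INR 1)).
Proof.
move=> chR _ _ _ _ HC.
have [K [H1 H2]] := card_bound chR C.
apply: (real_part (K := K)) => //.
  by apply: leq_trans HC.
exact: card_S_ge2.
Qed.
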